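(* Let $(X,\mathcal{A},\mu,T)$ be an ergodic probability preserving system. a) For every set $A\in\mathcal{A}$ (with $\mu(A)>0$) and integer $m\ge0$, $d_{[0,\infty]^{\mathbb{N}_0}}(\mu(A)\Phi_A\circ T^m,\mu(A)\Phi_A)\le m\mu(A)$ on $\{\varphi_A>m\}$. b) If $(A_l)_{l\ge1}$ is a sequence of asymptotically rare events and $R_l:=\mu(A_l)\Phi_{A_l}:X\to[0,\infty]^{\mathbb{N}_0}$, then $(R_l)$ is asymptotically $T$-invariant in measure. c) Likewise, if $R_l:=\mu(A_l)\Phi_{A_l}\circ T_{A_l}:X\to[0,\infty]^{\mathbb{N}}$, then $(R_l)$ is asymptotically $T$-invariant in measure.
   Context: For $A$ with $\mu(A)>0$: $\varphi_A(x):=\inf\{n\ge1:T^nx\in A\}$, $T_Ax:=T^{\varphi_A(x)}x$, $\Phi_A:=(\varphi_A,\varphi_A\circ T_A,\varphi_A\circ T_A^2,\ldots)$. $[0,\infty]$ carries the metric $d_{[0,\infty]}(s,t)=|e^{-s}-e^{-t}|$ and $[0,\infty]^{\mathbb{N}_0}$ the product metric $d(s,t)=\sum_{j\ge0}2^{-(j+1)}d_{[0,\infty]}(s^{(j)},t^{(j)})$ (similarly on $[0,\infty]^{\mathbb{N}}$). Asymptotically rare: $0<\mu(A_l)\to0$. $(R_l)$ asymptotically $T$-invariant in measure: $d(R_l\circ T,R_l)\to0$ in $\mu$-measure. *)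

(* Defs.v *)
From HB Require Import structures.
From mathcomp Require Import all_boot all_order all_algebra.
From mathcomp Require Import all_classical all_reals all_analysis.
Set Implicit Arguments. Unset Strict Implicit. Unset Printing Implicit Defensive.
Import Order.TTheory GRing.Theory Num.Theory.
Local Open Scope classical_set_scope.
Local Open Scope ring_scope.

Section Defs.
Context {d : measure_display} {X : measurableType d} {R : realType}.

Definition measure_preserving (P : probability X R) (T : X -> X) :=
  measurable_fun setT T /\
  forall B, measurable B -> P (T @^-1` B) = P B.

Definition ergodic_pps (P : probability X R) (T : X -> X) :=
  measure_preserving P T /\
  forall B, measurable B -> T @^-1` B = B -> P B = 0%E \/ P B = 1%E.

Definition hits (T : X -> X) (A : set X) (x : X) :=
  exists n, ((0 < n)%N && `[< A (iter n T x) >]).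

Definition hit_time (T : X -> X) (A : set X) (x : X) : option nat :=
  match pselect (hits T A x) with
  | left h => Some (ex_minn h)
  | right _ => None
  end.

Definition phiA (T : X -> X) (A : set X) (x : X) : \bar R :=
  match hit_time T A x with Some n => (n%:R)%:E | None => +oo%E end.

(* induced map T_A x = T^{phi_A x} x (set to x when phi_A x = +oo) *)
Definition TA (T : X -> X) (A : set X) (x : X) : X :=
  match hit_time T A x with Some n => iter n T x | None => x end.

(* mu(A) Phi_A : X -> [0,oo]^{N_0},  j |-> mu(A) phi_A(T_A^j x) *)
Definition scaledPhi (P : probability X R) (T : X -> X) (A : set X)
  (x : X) : nat -> \bar R :=
  fun j => (P A * phiA T A (iter j (TA T A) x))%E.

(* mu(A) Phi_A o T_A : X -> [0,oo]^N, coordinate k >= 1 stored at index k-1 *)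
Definition scaledPhiInd (P : probability X R) (T : X -> X) (A : set X)
  (x : X) : nat -> \bar R :=
  fun j => (P A * phiA T A (iter j.+1 (TA T A) x))%E.

End Defs.

Definition expneg {R : realType} (t : \bar R) : R :=
  match t with
  | EFin r => expR (- r)
  | _ => 0
  end.

Definition d01 {R : realType} (s t : \bar R) : R := `|expneg s - expneg t|.

Definition dseq {R : realType} (s t : nat -> \bar R) : R :=
  limn (fun n => \sum_(j < n) (2 ^- j.+1 * d01 (s j) (t j))).

Definition asymp_rare {d} {X : measurableType d} {R : realType}
  (P : probability X R) (A : nat -> set X) :=
  (forall l, measurable (A l) /\ (0 < P (A l))%E) /\
  (P \o A) @ \oo --> 0%E.

Definition asymp_T_invariant_in_measure {d} {X : measurableType d}
  {R : realType} (P : probability X R) (T : X -> X)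
  (Rl : nat -> X -> nat -> \bar R) :=
  forall eps : R, 0 < eps ->
    (fun l => P [set x | eps < dseq (Rl l (T x)) (Rl l x)]) @ \oo --> 0%E.

(* Main.v *)
Require Import Defs.
From HB Require Import structures.
From mathcomp Require Import all_boot all_order all_algebra.
From mathcomp Require Import all_classical all_reals all_analysis.
From mathcomp Require Import lra zify measurable_realfun.
Import Order.TTheory GRing.Theory Num.Theory.
Local Open Scope classical_set_scope.
Local Open Scope ring_scope.
Lemma hit_timeSome {d} {X : measurableType d} {T : X -> X} {A : set X} {x n} :
  hit_time T A x = Some n ->
  [/\ (0 < n)%N, A (iter n T x) & forall k, (0 < k < n)%N -> ~ A (iter k T x)].
Proof.
rewrite /hit_time; case: pselect => // h [<-].
case: ex_minnP => m /andP[m0 /asboolP Am] minm; split => // k /andP[k0 kn] Ak.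
have := minm k; rewrite k0 /=.
have -> : `[< A (iter k T x) >] = true by apply/asboolP.
by move=> /(_ isT); rewrite leqNgt kn.
Qed.

Lemma hit_timeNone {d} {X : measurableType d} {T : X -> X} {A : set X} {x} :
  hit_time T A x = None -> forall n, (0 < n)%N -> ~ A (iter n T x).
Proof.
rewrite /hit_time; case: pselect => // h _ n n0 An; apply: h.
by exists n; rewrite n0; apply/asboolP.
Qed.

Lemma hit_timeE_Some {d} {X : measurableType d} (T : X -> X) (A : set X) x n :
  (0 < n)%N -> A (iter n T x) -> (forall k, (0 < k < n)%N -> ~ A (iter k T x)) ->
  hit_time T A x = Some n.
Proof.
move=> n0 An mn; case E: (hit_time T A x) => [m|].
  have [m0 Am mm] := hit_timeSome E; congr Some.
  case: (ltngtP m n) => // [mn'|nm]; first by exfalso; apply: (mn m) => //; rewrite m0.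
  by exfalso; apply: (mm n) => //; rewrite n0.
by exfalso; exact: (hit_timeNone E n n0).
Qed.

Lemma hit_timeE_None {d} {X : measurableType d} (T : X -> X) (A : set X) x :
  (forall n, (0 < n)%N -> ~ A (iter n T x)) -> hit_time T A x = None.
Proof.
move=> H; case E: (hit_time T A x) => [m|] //.
by have [m0 Am _] := hit_timeSome E; exfalso; exact: (H m).
Qed.

Lemma mpre {d1 d2} {X : measurableType d1} {Y : measurableType d2} (f : X -> Y) B :
  measurable_fun setT f -> measurable B -> measurable (f @^-1` B).
Proof. by move=> mf mB; rewrite -[f @^-1` B]setTI; exact: mf. Qed.

Lemma measurable_iter {d} {X : measurableType d} (T : X -> X) n :
  measurable_fun setT T -> measurable_fun setT (iter n T).
Proof.
move=> mT; elim: n => [|n IH] /=; first exact: measurable_id.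
exact: (measurableT_comp mT IH).
Qed.

Lemma hit_time_fiber {d} {X : measurableType d} (T : X -> X) (A : set X) k :
  measurable_fun setT T -> measurable A ->
  measurable (hit_time T A @^-1` [set k]).
Proof.
move=> mT mA; case: k => [n|].
- have -> : hit_time T A @^-1` [set Some n] =
    (if (0 < n)%N then iter n T @^-1` A else set0) `&`
    \bigcap_k (if (0 < k < n)%N then ~` (iter k T @^-1` A) else setT).
    apply/seteqP; split => x /=.
    + move=> /hit_timeSome[n0 An mn]; rewrite n0; split => // k _ /=.
      by case: ifP => // kn; exact: mn.
    + move=> [H1 H2]; case: (ltnP 0 n) H1 => n0 // An.
      apply: hit_timeE_Some => // k kn; have := H2 k I; rewrite /= kn; exact.
  apply: measurableI; first by case: ifP => _ //; exact: mpre (measurable_iter _ _ mT) mA.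
  apply: bigcapT_measurable => k; case: ifP => _ //.
  by apply: measurableC; exact: mpre (measurable_iter _ _ mT) mA.
- have -> : hit_time T A @^-1` [set None] =
    \bigcap_k (if (0 < k)%N then ~` (iter k T @^-1` A) else setT).
    apply/seteqP; split => x /=.
    + move=> /hit_timeNone H k _ /=; case: ifP => // k0; exact: H.
    + move=> H2; apply: hit_timeE_None => k k0; have := H2 k I; rewrite /= k0; exact.
  apply: bigcapT_measurable => k; case: ifP => _ //.
  by apply: measurableC; exact: mpre (measurable_iter _ _ mT) mA.
Qed.

Lemma measurable_factor {d dd} {X : measurableType d} {Y : measurableType dd}
  (K : countType) (h : X -> K) (F : K -> Y) :
  (forall k, measurable (h @^-1` [set k])) -> measurable_fun setT (F \o h).
Proof.
move=> mh _ B mB; rewrite setTI.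
have -> : (F \o h) @^-1` B = \bigcup_n (match unpickle n with
   Some k => if pselect (B (F k)) then h @^-1` [set k] else set0
 | None => set0 end).
  apply/seteqP; split => x /=.
  + move=> Bx; exists (pickle (h x)) => //; rewrite pickleK.
    by case: pselect.
  + move=> [n _]; case: unpickle => [k|] //; case: pselect => // Bk /= ->; exact.
apply: bigcupT_measurable => n; case: unpickle => [k|]; last exact: measurable0.
case: pselect => Bk; [exact: mh|exact: measurable0].
Qed.

Lemma measurable_TA {d} {X : measurableType d} (T : X -> X) (A : set X) :
  measurable_fun setT T -> measurable A -> measurable_fun setT (TA T A).
Proof.
move=> mT mA _ B mB; rewrite setTI.
have -> : TA T A @^-1` B = (\bigcup_n ((hit_time T A @^-1` [set Some n]) `&`
   (iter n T @^-1` B))) `|` ((hit_time T A @^-1` [set None]) `&` B).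
  apply/seteqP; split => x /=; rewrite /TA.
  + case E: (hit_time T A x) => [n|] Bx; first by left; exists n.
    by right.
  + case=> [[n _ [-> Bx]]|[-> Bx]] //.
apply: measurableU; last by apply: measurableI => //; exact: hit_time_fiber.
apply: bigcupT_measurable => n; apply: measurableI; first exact: hit_time_fiber.
exact: mpre (measurable_iter _ _ mT) mB.
Qed.

Lemma measurable_iterTA {d} {X : measurableType d} (T : X -> X) (A : set X) j :
  measurable_fun setT T -> measurable A -> measurable_fun setT (iter j (TA T A)).
Proof. by move=> mT mA; apply: measurable_iter; exact: measurable_TA. Qed.

Lemma expneg_01 {R : realType} (t : \bar R) : (0 <= t)%E ->
  0 <= expneg t <= 1.
Proof.
case: t => [r||] //=; rewrite ?lee_fin => r0; last by rewrite lexx ler01.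
by rewrite expR_ge0 expR_le1 oppr_le0.
Qed.

Lemma d01_le1 {R : realType} {s t : \bar R} : (0 <= s)%E -> (0 <= t)%E ->
  d01 s t <= 1.
Proof.
move=> /expneg_01/andP[s0 s1] /expneg_01/andP[t0 t1]; rewrite /d01.
rewrite ler_norml; apply/andP; split; lra.
Qed.

Lemma geom_half {R : realType} n : (2 : R) ^- n = 2 * 2 ^- n.+1.
Proof.
rewrite exprSr invfM mulrA mulrC mulrA.
by rewrite [2^-1 * 2]mulrC divff ?mul1r // pnatr_eq0.
Qed.

Lemma measurable_dseq {d} {X : measurableType d} {R : realType}
  (T : X -> X) (A : set X) (c : \bar R) (g1 g2 : nat -> X -> X) :
  measurable_fun setT T -> measurable A -> (0 <= c)%E ->
  (forall j, measurable_fun setT (g1 j)) -> (forall j, measurable_fun setT (g2 j)) ->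
  measurable_fun setT (fun x => dseq (fun j => c * phiA T A (g1 j x))%E
                                     (fun j => c * phiA T A (g2 j x))%E).
Proof.
move=> mT mA c0 mg1 mg2.
pose u x n := \sum_(j < n) (2 ^- j.+1 * d01 (c * phiA T A (g1 j x))%E
                                          (c * phiA T A (g2 j x))%E).
have phi0 y : (0 <= phiA T A y :> \bar R)%E.
  by rewrite /phiA; case: hit_time => // n; rewrite lee_fin.
apply: (@measurable_fun_cvg _ _ _ _ (fun n x => u x n)).
- move=> n; apply: measurable_sum => j.
  pose pr := fun x => (hit_time T A (g1 j x), hit_time T A (g2 j x)).
  pose pv := fun k : option nat => (match k with Some n => (n%:R)%:E | None => +oo%E end : \bar R).
  apply: (@measurable_factor _ _ _ _ _ pr
     (fun k => 2 ^- j.+1 * d01 (c * pv k.1)%E (c * pv k.2)%E)).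
  case=> k1 k2.
  have -> : pr @^-1` [set (k1, k2)] = (g1 j @^-1` (hit_time T A @^-1` [set k1])) `&`
       (g2 j @^-1` (hit_time T A @^-1` [set k2])).
    apply/seteqP; split => x /=; rewrite /pr.
    + by case=> -> ->.
    + by case=> -> ->.
  by apply: measurableI; apply: mpre => //; exact: hit_time_fiber.
- move=> x _.
  have ucvg : cvgn (u x).
    apply: nondecreasing_is_cvgn.
      apply/nondecreasing_seqP => n; rewrite /u big_ord_recr /= lerDl.
      by apply: mulr_ge0; [by []|exact: normr_ge0].
    exists 1 => _ [n _ <-].
    suff : u x n <= 1 - 2 ^- n by move=> h; apply: (le_trans h); rewrite gerDl oppr_le0.
    elim: n => [|n IH]; first by rewrite /u big_ord0 expr0 invr1 subrr.
    rewrite /u big_ord_recr /= -/(u x n).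
    have h1 := d01_le1 (mule_ge0 c0 (phi0 (g1 n x))) (mule_ge0 c0 (phi0 (g2 n x))).
    have h2 : 0 < (2:R) ^- n.+1 by rewrite invr_gt0 exprn_gt0.
    have h3 : 2 ^- n.+1 * d01 (c * phiA T A (g1 n x))%E (c * phiA T A (g2 n x))%E <= 2 ^- n.+1.
      by rewrite -[X in _ <= X]mulr1 ler_wpM2l // ltW.
    rewrite geom_half in IH; lra.
  exact: ucvg.
Qed.

Lemma iter_fix {Y : Type} (f : Y -> Y) x j : f x = x -> iter j f x = x.
Proof. by move=> fx; elim: j => //= j ->. Qed.

Lemma hit_shiftS {d} {X : measurableType d} (T : X -> X) (A : set X) x m n :
  hit_time T A x = Some n -> (m < n)%N ->
  hit_time T A (iter m T x) = Some (n - m)%N.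
Proof.
move=> /hit_timeSome[n0 An mn] mn'.
apply: hit_timeE_Some; first by rewrite subn_gt0.
  by rewrite -iterD subnK //; exact: ltnW.
move=> k /andP[k0 kn]; rewrite -iterD; apply: mn.
rewrite addn_gt0 k0 /=; move: kn mn'; clear; lia.
Qed.

Lemma hit_shiftN {d} {X : measurableType d} (T : X -> X) (A : set X) x m :
  hit_time T A x = None -> hit_time T A (iter m T x) = None.
Proof.
move=> /hit_timeNone H; apply: hit_timeE_None => k k0; rewrite -iterD.
by apply: H; rewrite addn_gt0 k0.
Qed.

Lemma sum_const0 {R : realType} (f : nat -> R) n :
  (forall j, (0 < j)%N -> f j = 0) ->
  \sum_(j < n.+1) f j = f 0%N.
Proof.
move=> H; elim: n => [|n IH]; first by rewrite big_ord1.
by rewrite big_ord_recr /= IH (H n.+1) // addr0.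
Qed.

Lemma partA {d} {X : measurableType d} {R : realType} (P : probability X R)
  (T : X -> X) (A : set X) (m : nat) x :
  measurable A -> (0 < P A)%E -> ((m%:R : R)%:E < phiA T A x)%E ->
  ((dseq (scaledPhi P T A (iter m T x)) (scaledPhi P T A x))%:E
         <= m%:R%:E * P A)%E.
Proof.
move=> mA PA0 hm.
have PA1 := probability_le1 P mA.
have finPA : P A \is a fin_num.
  by rewrite ge0_fin_numE ?(ltW PA0) //; exact: (le_lt_trans PA1 (ltry 1)).
set c := fine (P A); have PAc : P A = c%:E by rewrite fineK.
have c0 : 0 < c by rewrite -lte_fin -PAc.
have c1 : c <= 1 by rewrite -lee_fin -PAc.
rewrite PAc.
case E: (hit_time T A x) => [n|].
- have mn : (m < n)%N.
    by move: hm; rewrite /phiA E lte_fin ltr_nat.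
  have Ey := hit_shiftS T A x m n E mn.
  have TAy : TA T A (iter m T x) = TA T A x.
    by rewrite /TA Ey E -iterD subnK //; exact: ltnW.
  pose D0 := d01 (scaledPhi P T A (iter m T x) 0%N) (scaledPhi P T A x 0%N).
  have -> : dseq (scaledPhi P T A (iter m T x)) (scaledPhi P T A x) = 2^-1 * D0.
    rewrite /dseq; apply: norm_lim_near_cst; near=> k.
    have k1 : (0 < k)%N by near: k; exact: nbhs_infty_ge.
    rewrite -(prednK k1) (sum_const0 (fun j : nat => 2 ^- j.+1 * d01 (scaledPhi P T A (iter m T x) j) (scaledPhi P T A x j))) ?expr1 //.
    move=> j j0; rewrite /scaledPhi; case: j j0 => // j _.
    by rewrite !iterSr TAy /d01 subrr normr0 mulr0.
  rewrite /D0 /scaledPhi /= /phiA Ey E PAc /d01 /expneg /= lee_fin.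
  set k := (n - m)%N.
  have hn : (n%:R : R) = k%:R + m%:R by rewrite -natrD subnK // (ltnW mn).
  rewrite hn.
  rewrite mulrDr opprD expRD.
  have a0 : 0 < expR (- (c * k%:R)) by exact: expR_gt0.
  have a1 : expR (- (c * k%:R)) <= 1 by rewrite expR_le1 oppr_le0 mulr_ge0 // ltW.
  have b0 : 0 < expR (- (c * m%:R)) by exact: expR_gt0.
  have b1 : expR (- (c * m%:R)) <= 1 by rewrite expR_le1 oppr_le0 mulr_ge0 // ltW.
  have b2 := expR_ge1Dx (- (c * m%:R)).
  set a := expR (- (c * k%:R)) in a0 a1 *; set b := expR (- (c * m%:R)) in b0 b1 b2 *.
  rewrite ger0_norm; last by rewrite subr_ge0; nra.
  nra.
- have Ey := hit_shiftN T A x m E.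
  have fy j : iter j (TA T A) (iter m T x) = iter m T x.
    by apply: iter_fix; rewrite /TA Ey.
  have fx j : iter j (TA T A) x = x by apply: iter_fix; rewrite /TA E.
  have -> : dseq (scaledPhi P T A (iter m T x)) (scaledPhi P T A x) = 0.
    rewrite /dseq; apply: norm_lim_near_cst; near=> k.
    rewrite big1 // => j _; rewrite /scaledPhi fy fx /phiA Ey E PAc gt0_muley ?lte_fin //.
    by rewrite /d01 subrr normr0 mulr0.
  by rewrite mule_ge0 // lee_fin ltW.
Unshelve. all: end_near.
Qed.

Lemma squeeze_part {d} {X : measurableType d} {R : realType} (P : probability X R)
  (T : X -> X) (A : nat -> set X) (S : nat -> set X) :
  measurable_fun setT T -> (forall B, measurable B -> P (T @^-1` B) = P B) ->
  (forall l, measurable (A l)) -> (P \o A) @ \oo --> 0%E ->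
  (forall l, measurable (S l)) -> (\forall l \near \oo, S l `<=` T @^-1` (A l)) ->
  (fun l => P (S l)) @ \oo --> 0%E.
Proof.
move=> mT mP mA PA mS sub.
apply: (@squeeze_cvge _ _ _ _ (fun _ => 0%E) _ (P \o A)); last 2 first.
- exact: cvg_cst.
- exact: PA.
apply: filterS sub => l sl; rewrite measure_ge0 /= -(mP (A l)) //.
apply: le_measure => //; rewrite inE; [exact: mS | exact: mpre].
Qed.

Lemma dseq_eq0 {R : realType} (s t : nat -> \bar R) : (forall j, s j = t j) -> dseq s t = 0.
Proof.
move=> st; rewrite /dseq; apply: norm_lim_near_cst; near=> k.
by rewrite big1 // => j _; rewrite st /d01 subrr normr0 mulr0.
Unshelve. all: end_near.
Qed.

Lemma phi_gt1 {d} {X : measurableType d} {R : realType} (T : X -> X) (B : set X) x :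
  ~ B (T x) -> (((1%N)%:R : R)%:E < phiA T B x)%E.
Proof.
move=> nB; rewrite /phiA; case E: (hit_time T B x) => [n|]; last exact: ltry.
have [n0 Bn _] := hit_timeSome E.
rewrite lte_fin ltr_nat; case: n n0 Bn {E} => [//|[|n]] // _ /= Bn; exfalso; exact: nB.
Qed.

Lemma partB {d} {X : measurableType d} {R : realType} (P : probability X R) (T : X -> X) :
  measurable_fun setT T -> (forall B, measurable B -> P (T @^-1` B) = P B) ->
  forall A : nat -> set X, asymp_rare P A ->
     asymp_T_invariant_in_measure P T (fun l => scaledPhi P T (A l)).
Proof.
move=> mT mP A [hA PA] eps eps0.
have mA l : measurable (A l) by case: (hA l).
apply: (squeeze_part P T A (fun l => [set x | eps < dseq (scaledPhi P T (A l) (T x)) (scaledPhi P T (A l) x)]) mT mP mA PA).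
- move=> l.
  have mf := @measurable_dseq _ _ R T (A l) (P (A l))
    (fun j x => iter j (TA T (A l)) (T x)) (fun j => iter j (TA T (A l))) mT (mA l)
    (measure_ge0 _ _)
    (fun j => measurableT_comp (measurable_iterTA _ _ j mT (mA l)) mT)
    (fun j => measurable_iterTA _ _ j mT (mA l)).
  have -> : [set x | eps < dseq (scaledPhi P T (A l) (T x)) (scaledPhi P T (A l) x)] =
     (fun x => dseq (fun j => P (A l) * phiA T (A l) (iter j (TA T (A l)) (T x)))%E
                    (fun j => P (A l) * phiA T (A l) (iter j (TA T (A l)) x))%E) @^-1`
      `]eps, +oo[%classic.
    by apply/seteqP; split => x /=; rewrite in_itv /= andbT.
  exact: mpre.
- have /fine_cvgP[_ fc] := PA.
  near=> l => x /= Sx.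
  have lt : fine (P (A l)) < eps by near: l; exact: (cvgr_lt 0 fc eps eps0).
  apply: contrapT => nA.
  have := partA P T (A l) 1%N x (mA l) (proj2 (hA l)) (phi_gt1 T (A l) x nA).
  have PAf : P (A l) = (fine (P (A l)))%:E.
    rewrite fineK // ge0_fin_numE ?measure_ge0 //.
    exact: (le_lt_trans (probability_le1 P (mA l)) (ltry 1)).
  rewrite PAf mul1e lee_fin => h.
  have : eps < fine (P (A l)) by apply: (lt_le_trans Sx); exact: h.
  by move=> h2; move: lt => /=; rewrite ltNge (ltW h2).
Unshelve. all: end_near.
Qed.

Lemma partC {d} {X : measurableType d} {R : realType} (P : probability X R) (T : X -> X) :
  measurable_fun setT T -> (forall B, measurable B -> P (T @^-1` B) = P B) ->
  forall A : nat -> set X, asymp_rare P A ->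
     asymp_T_invariant_in_measure P T (fun l => scaledPhiInd P T (A l)).
Proof.
move=> mT mP A [hA PA] eps eps0.
have mA l : measurable (A l) by case: (hA l).
apply: (squeeze_part P T A (fun l => [set x | eps < dseq (scaledPhiInd P T (A l) (T x)) (scaledPhiInd P T (A l) x)]) mT mP mA PA).
- move=> l.
  have mf := @measurable_dseq _ _ R T (A l) (P (A l))
    (fun j x => iter j.+1 (TA T (A l)) (T x)) (fun j => iter j.+1 (TA T (A l))) mT (mA l)
    (measure_ge0 _ _)
    (fun j => measurableT_comp (measurable_iterTA _ _ j.+1 mT (mA l)) mT)
    (fun j => measurable_iterTA _ _ j.+1 mT (mA l)).
  have -> : [set x | eps < dseq (scaledPhiInd P T (A l) (T x)) (scaledPhiInd P T (A l) x)] =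
     (fun x => dseq (fun j => P (A l) * phiA T (A l) (iter j.+1 (TA T (A l)) (T x)))%E
                    (fun j => P (A l) * phiA T (A l) (iter j.+1 (TA T (A l)) x))%E) @^-1`
      `]eps, +oo[%classic.
    by apply/seteqP; split => x /=; rewrite in_itv /= andbT.
  exact: mpre.
- apply: nearW => l x /= Sx; apply: contrapT => nA.
  suff : dseq (scaledPhiInd P T (A l) (T x)) (scaledPhiInd P T (A l) x) = 0.
    by move=> h; move: Sx; rewrite h ltNge (ltW eps0).
  apply: dseq_eq0 => j; rewrite /scaledPhiInd !iterSr.
  case E: (hit_time T (A l) x) => [n|].
  + have [n0 Bn _] := hit_timeSome E.
    have n1 : (1 < n)%N.
      rewrite ltn_neqAle n0 andbT; apply/eqP => n1.
      by apply: nA; rewrite -n1 in Bn.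
    have Ey := hit_shiftS T (A l) x 1 n E n1.
    have -> : TA T (A l) (T x) = TA T (A l) x.
      rewrite /TA /= in Ey *; rewrite Ey E -[in RHS](subnK (ltnW n1)) iterD //.
    by [].
  + have Ey := hit_shiftN T (A l) x 1 E.
    have fy k : iter k (TA T (A l)) (T x) = T x.
      by apply: iter_fix; rewrite /TA /= in Ey *; rewrite Ey.
    have fx k : iter k (TA T (A l)) x = x by apply: iter_fix; rewrite /TA E.
    have TAy : TA T (A l) (T x) = T x by rewrite /TA /= in Ey *; rewrite Ey.
    have TAx : TA T (A l) x = x by rewrite /TA E.
    rewrite TAy TAx fy fx /phiA /= in Ey *; rewrite Ey E.
    by [].
Qed.

Theorem mainTheorem12 (d : measure_display) (X : measurableType d)
  (R : realType) (P : probability X R) (T : X -> X) :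
  ergodic_pps P T ->
  (* a) *)
  (forall (A : set X) (m : nat), measurable A -> (0 < P A)%E ->
     forall x, ((m%:R : R)%:E < phiA T A x)%E ->
       ((dseq (scaledPhi P T A (iter m T x)) (scaledPhi P T A x))%:E
         <= m%:R%:E * P A)%E) /\
  (* b) *)
  (forall A : nat -> set X, asymp_rare P A ->
     asymp_T_invariant_in_measure P T (fun l => scaledPhi P T (A l))) /\
  (* c) *)
  (forall A : nat -> set X, asymp_rare P A ->
     asymp_T_invariant_in_measure P T (fun l => scaledPhiInd P T (A l))).
Proof.
move=> [[mT mP] _]; split; last split.
- move=> A m mA PA x hx; exact: partA.
- exact: partB.
- exact: partC.
Qed.
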